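(* Let $\boldsymbol{\sigma}\in\mathcal{G}_{\mathcal{N}|\mathcal{R}}$ be an extremal assemblage. Then every bipartite state $\rho^{AB}\in\mathcal{S}_{\boldsymbol{\sigma}}$, on $\mathcal{H}_A\otimes\mathcal{H}_B$ with $\mathcal{H}_A$ of any finite dimension, satisfies $E_{\mathrm{F}}(\rho^{AB})=S(\rho_{\boldsymbol{\sigma}})$.
   Context: Fix finite sets $\mathcal{N}$ (outcomes) and $\mathcal{R}$ (inputs) and a finite-dimensional Hilbert space $\mathcal{H}_B$. An assemblage is a tuple $\boldsymbol{\sigma}=(\sigma_{n|r})_{n\in\mathcal{N},r\in\mathcal{R}}$ of positive semidefinite operators on $\mathcal{H}_B$ such that $\rho_{\boldsymbol{\sigma}}:=\sum_{n}\sigma_{n|r}$ is independent of $r$ and has trace $1$; $\rho_{\boldsymbol{\sigma}}$ is called the marginal of $\boldsymbol{\sigma}$. The set $\mathcal{G}_{\mathcal{N}|\mathcal{R}}$ of all such assemblages is convex (convex combinations taken entrywise). An assemblage is extremal if it cannot be written as $p\boldsymbol{\sigma}^1+(1-p)\boldsymbol{\sigma}^2$ with $0<p<1$ and $\boldsymbol{\sigma}^1\neq\boldsymbol{\sigma}^2$ in $\mathcal{G}_{\mathcal{N}|\mathcal{R}}$. A state $\rho^{AB}$ on $\mathcal{H}_A\otimes\mathcal{H}_B$ ($\mathcal{H}_A$ any finite-dimensional space) realizes $\boldsymbol{\sigma}$ if for each $r\in\mathcal{R}$ there is a POVM $\{M_{n|r}\}_{n\in\mathcal{N}}$ on $\mathcal{H}_A$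 ($M_{n|r}\ge 0$, $\sum_n M_{n|r}=\mathbb{I}$) with $\sigma_{n|r}=\mathrm{Tr}_A[(M_{n|r}\otimes\mathbb{I}^B)\rho^{AB}]$ for all $n,r$; $\mathcal{S}_{\boldsymbol{\sigma}}$ is the set of all states realizing $\boldsymbol{\sigma}$. $S(\rho)=-\mathrm{Tr}(\rho\log_2\rho)$ is the von Neumann entropy. The entanglement of formation of a bipartite state is $E_{\mathrm{F}}(\rho^{AB})=\inf\{\sum_i p^i S(\mathrm{Tr}_A|\phi^i\rangle\langle\phi^i|) : \sum_i p^i|\phi^i\rangle\langle\phi^i|=\rho^{AB},\ p^i\ge 0,\ \sum_i p^i=1\}$, the infimum being over finite decompositions into pure states. *)

(* Defs.v *)
From HB Require Import structures.
From mathcomp Require Import all_boot all_order all_algebra.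
From mathcomp Require Import sesquilinear spectral.
From mathcomp Require Import complex.
From mathcomp Require mxtens.
From mathcomp Require Import classical_sets reals exp.

Set Implicit Arguments.
Unset Strict Implicit.
Unset Printing Implicit Defensive.

Import Order.TTheory GRing.Theory Num.Theory.
Local Open Scope ring_scope.
Local Open Scope sesquilinear_scope.

Section QDefs.
Variable R : realType.
Local Notation C := R[i].

(* Positive semidefinite operator on C^n: <v|A|v> >= 0 for every vector v
   (in the numeric order of C, i.e. real and nonnegative; this forces A
   to be Hermitian). Vectors are row vectors; <v|A|v> = v A v^*. *)
Definition psdmx n (A : 'M[C]_n) : Prop :=
  forall v : 'rV[C]_n, 0 <= (v *m A *m v ^t*) 0 0.

Definition is_state n (rho : 'M[C]_n) : Prop :=
  psdmx rho /\ \tr rho = 1.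

(* Tensor product A (x) B on C^m (x) C^p ~ C^(m*p), basis |i>|j> indexed by
   mxtens.mxtens_index (i, j). *)
Definition kron m p (A : 'M[C]_m) (B : 'M[C]_p) : 'M[C]_(m * p) :=
  mxtens.tensmx A B.

Definition ptraceA dA dB (X : 'M[C]_(dA * dB)) : 'M[C]_dB :=
  \matrix_(j, j') \sum_(i < dA)
     X (mxtens.mxtens_index (i, j)) (mxtens.mxtens_index (i, j')).

Definition xlog2x (x : R) : R := if x == 0 then 0 else x * (ln x / ln 2).

(* Von Neumann entropy S(rho) = - Tr (rho log2 rho) = - sum_k lambda_k log2 lambda_k,
   where the lambda_k are the eigenvalues (with multiplicity) of rho, given by
   the spectral decomposition rho = P^-1 diag(lambda) P of the normal matrix rho
   (library: spectral_diag). *)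
Definition vN_entropy n (rho : 'M[C]_n) : R :=
  - \sum_(k < n) xlog2x (complex.Re (spectral_diag rho 0 k)).

Definition EF dA dB (rho : 'M[C]_(dA * dB)) : R :=
  inf [set x : R | exists (k : nat) (p : 'I_k -> R) (phi : 'I_k -> 'rV[C]_(dA * dB)),
        [/\ (forall i, 0 <= p i), \sum_(i < k) p i = 1,
            (forall i, (phi i *m (phi i) ^t*) 0 0 = 1),
            \sum_(i < k) ((p i)%:C)%C *: ((phi i) ^t* *m phi i) = rho &
            x = \sum_(i < k) p i * vN_entropy (ptraceA ((phi i) ^t* *m phi i))]].

Section Assemblages.
Variables (Nn Rin : finType) (dB : nat).

Definition is_assemblage (sigma : Nn -> Rin -> 'M[C]_dB) : Prop :=
  [/\ (forall n r, psdmx (sigma n r)),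
      (forall r r', \sum_n sigma n r = \sum_n sigma n r') &
      (forall r, \tr (\sum_n sigma n r) = 1)].

(* The marginal rho_sigma = sum_n sigma n r (for any r; Rin is assumed nonempty). *)
Definition marginal (sigma : Nn -> Rin -> 'M[C]_dB) : 'M[C]_dB :=
  if [pick r : Rin] is Some r then \sum_n sigma n r else 0.

Definition extremal_assemblage (sigma : Nn -> Rin -> 'M[C]_dB) : Prop :=
  is_assemblage sigma /\
  ~ (exists (p : R) (s1 s2 : Nn -> Rin -> 'M[C]_dB),
       [/\ 0 < p < 1, is_assemblage s1, is_assemblage s2, s1 <> s2 &
           forall n r, sigma n r = (p%:C)%C *: s1 n r + ((1 - p)%:C)%C *: s2 n r]).

Definition realizes dA (sigma : Nn -> Rin -> 'M[C]_dB) (rhoAB : 'M[C]_(dA * dB)) : Prop :=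
  is_state rhoAB /\
  forall r : Rin, exists M : Nn -> 'M[C]_dA,
    [/\ (forall n, psdmx (M n)), \sum_n M n = 1%:M &
        forall n, sigma n r = ptraceA (kron (M n) 1%:M *m rhoAB)].

End Assemblages.
End QDefs.

(* Main.v *)
Require Import Defs.
From HB Require Import structures.
From mathcomp Require Import all_boot all_order all_algebra.
From mathcomp Require Import sesquilinear spectral complex.
From mathcomp Require mxtens.
From mathcomp Require Import boolp classical_sets reals.
From mathcomp Require Import ring lra.
Set Implicit Arguments.
Unset Strict Implicit.
Unset Printing Implicit Defensive.
Import Order.TTheory GRing.Theory Num.Theory.
Local Open Scope ring_scope.
Local Open Scope sesquilinear_scope.

Section S.
Variable R : realType.
Local Notation C := R[i].
Local Notation idx := mxtens.mxtens_index.

Lemma sum_tens m n (F : 'I_(m*n) -> C) :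
  \sum_a F a = \sum_(i < m) \sum_(j < n) F (idx (i, j)).
Proof.
rewrite pair_big /=.
rewrite (reindex (@mxtens.mxtens_index m n)) /=.
  by apply: eq_bigr => -[i j].
by exists (@mxtens.mxtens_unindex m n) => x _; rewrite (mxtens.mxtens_indexK, mxtens.mxtens_unindexK).
Qed.

Lemma ptr_kronE dA dB (M : 'M[C]_dA) (X : 'M[C]_(dA*dB)) j j' :
  ptraceA (kron M 1%:M *m X) j j' =
  \sum_(i < dA) \sum_(k < dA) M i k * X (idx (k, j)) (idx (i, j')).
Proof.
rewrite mxE; apply: eq_bigr => i _.
rewrite mxE sum_tens; apply: eq_bigr => k _.
rewrite (bigD1 j) //= big1 ?addr0.
  by rewrite /kron mxtens.tensmxE mxE eqxx mulr1.
by move=> l /negbTE nl; rewrite /kron mxtens.tensmxE mxE eq_sym nl mulr0 mul0r.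
Qed.

Lemma qformE n (A : 'M[C]_n) (v : 'rV[C]_n) :
  (v *m A *m v^t*) 0 0 = \sum_b \sum_a v 0 a * A a b * (v 0 b)^*.
Proof.
rewrite mxE; apply: eq_bigr => b _; rewrite !mxE mulr_suml.
by apply: eq_bigr.
Qed.

Lemma psd_trmx n (M : 'M[C]_n) : psdmx M -> forall u : 'rV[C]_n, 0 <= (u *m M^T *m u^t*) 0 0.
Proof.
move=> psdM u; have H := psdM (map_mx Num.conj_op u).
rewrite qformE exchange_big /= in H; apply: le_trans H _.
rewrite qformE le_eqVlt; apply/orP; left; apply/eqP.
apply: eq_bigr => b _; apply: eq_bigr => a _.
by rewrite !mxE conjCK [LHS]mulrC mulrA mulrAC.
Qed.

Definition mat_of dA dB (phi : 'rV[C]_(dA * dB)) : 'M[C]_(dA, dB) :=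
  \matrix_(i, j) phi 0 (idx (i, j)).

Lemma ptr_pureE dA dB (M : 'M[C]_dA) (phi : 'rV[C]_(dA*dB)) :
  ptraceA (kron M 1%:M *m (phi^t* *m phi)) =
  (mat_of phi)^t* *m M^T *m mat_of phi.
Proof.
apply/matrixP => j j'; rewrite ptr_kronE mxE; apply: eq_bigr => i _.
rewrite !mxE mulr_suml; apply: eq_bigr => k _.
rewrite !mxE big_ord1 !mxE.
by rewrite mulrCA mulrA.
Qed.

Lemma psd_ptr dA dB (M : 'M[C]_dA) (phi : 'rV[C]_(dA*dB)) :
  psdmx M -> psdmx (ptraceA (kron M 1%:M *m (phi^t* *m phi))).
Proof.
move=> psdM v; rewrite ptr_pureE.
have -> : v *m ((mat_of phi)^t* *m M^T *m mat_of phi) *m v^t*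
   = (v *m (mat_of phi)^t*) *m M^T *m (v *m (mat_of phi)^t*)^t*.
  by rewrite trmx_mul map_mxM trmxCK !mulmxA.
exact: psd_trmx.
Qed.

Lemma delta_tc n (a : 'I_n) : (delta_mx 0 a : 'rV[C]_n)^t* = delta_mx a 0.
Proof. by apply/matrixP => x y; rewrite !mxE rmorph_nat andbC. Qed.

Lemma bil_delta n (A : 'M[C]_n) a b :
  ((delta_mx 0 a : 'rV[C]_n) *m A *m (delta_mx 0 b : 'rV[C]_n)^t*) 0 0 = A a b.
Proof. by rewrite delta_tc -rowE -colE !mxE. Qed.

Lemma q_expand n (A : 'M[C]_n) (u w : 'rV[C]_n) c :
  ((u + c *: w) *m A *m (u + c *: w)^t*) 0 0 =
  (u *m A *m u^t*) 0 0 + c^* * (u *m A *m w^t*) 0 0 + c * (w *m A *m u^t*) 0 0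
  + c * c^* * (w *m A *m w^t*) 0 0.
Proof.
rewrite linearD /= map_mxD linearZ /= map_mxZ.
rewrite !mulmxDl !mulmxDr ?scalemxAl -?scalemxAr -?scalemxAl !mxE.
rewrite /=. ring.
Qed.

Lemma psd_real n (A : 'M[C]_n) (v : 'rV[C]_n) : psdmx A -> ((v *m A *m v^t*) 0 0)^* = (v *m A *m v^t*) 0 0.
Proof. by move=> h; apply/CrealP/ger0_real/h. Qed.

Lemma psd_herm n (A : 'M[C]_n) : psdmx A -> A^t* = A.
Proof.
move=> psdA; apply/matrixP => a b; rewrite !mxE.
pose ea : 'rV[C]_n := delta_mx 0 a; pose eb : 'rV[C]_n := delta_mx 0 b.
have E1 := psd_real (ea + 1 *: eb) psdA.
have E2 := psd_real (ea + 'i *: eb) psdA.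
rewrite q_expand !bil_delta in E1; rewrite q_expand !bil_delta in E2.
have Pa := psd_real ea psdA; have Pb := psd_real eb psdA.
rewrite !bil_delta in Pa Pb.
rewrite conjC1 !mulr1 !mul1r !rmorphD /= Pa Pb in E1.
rewrite !rmorphD !rmorphM /= ?conjCK Pa Pb conjCi in E2.
have h2 : (2:C) != 0 by rewrite pnatr_eq0.
have Hi : ('i : C) != 0 := @neq0Ci _.
have E3 : (A a b)^* - (A b a)^* = A b a - A a b.
  apply: (mulfI Hi).
  transitivity ((A a a + 'i * (A a b)^* + - 'i * (A b a)^* + - 'i * 'i * A b b)
     - A a a + 'i * 'i * A b b); first by ring.
  rewrite E2; ring.
apply: (mulfI h2).
have -> : 2 * (A b a)^* = ((A a b)^* + (A b a)^*) - ((A a b)^* - (A b a)^*) by ring.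
rewrite E3.
have -> : (A a b)^* + (A b a)^* = A a b + A b a.
  apply: (addrI (A a a)); apply: (addIr (A b b)); rewrite !addrA; exact: E1.
ring.
Qed.

Lemma psd_add n (A B : 'M[C]_n) : psdmx A -> psdmx B -> psdmx (A + B).
Proof. by move=> hA hB v; rewrite mulmxDr mulmxDl mxE addr_ge0. Qed.

Lemma psd_scale n (A : 'M[C]_n) c : 0 <= c -> psdmx A -> psdmx (c *: A).
Proof. by move=> hc hA v; rewrite -scalemxAr -scalemxAl mxE mulr_ge0. Qed.

Lemma psd0 n : psdmx (0 : 'M[C]_n).
Proof. by move=> v; rewrite mulmx0 mul0mx mxE. Qed.

Lemma psd_sum n I (r : seq I) (P : pred I) (F : I -> 'M[C]_n) :
  (forall i, P i -> psdmx (F i)) -> psdmx (\sum_(i <- r | P i) F i).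
Proof.
move=> h; elim/big_rec: _ => [|i x Pi hx]; first exact: psd0.
by apply: psd_add => //; apply: h.
Qed.

Lemma Re_ge0 (z : C) : 0 <= z -> ((complex.Re z)%:C)%C = z /\ 0 <= complex.Re z.
Proof.
move=> hz; split; last by move: hz; rewrite lecE => /andP[].
by rewrite [RHS]complexE ger0_Im // mulr0 addr0.
Qed.

Lemma row_bil n (P B : 'M[C]_n) k :
  (row k P *m B *m (row k P)^t*) 0 0 = (P *m B *m P^t*) k k.
Proof.
by rewrite -(bil_delta (P *m B *m P^t*)) rowE trmx_mul map_mxM !mulmxA.
Qed.

Lemma state_decomp n (rho : 'M[C]_n) : is_state rho ->
  exists (p : 'I_n -> R) (phi : 'I_n -> 'rV[C]_n),
  [/\ (forall i, 0 <= p i), \sum_(i < n) p i = 1,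
      (forall i, (phi i *m (phi i)^t*) 0 0 = 1) &
      \sum_(i < n) ((p i)%:C)%C *: ((phi i)^t* *m phi i) = rho].
Proof.
move=> [psdr trr].
have hn : rho \is normalmx by apply/normalmxP; rewrite psd_herm.
have Hr := orthomx_spectralP hn.
set P := spectralmx rho in Hr; set d := spectral_diag rho in Hr.
have PU : P *m P^t* = 1%:M by apply/unitarymxP/spectral_unitarymx.
rewrite invmx_unitary ?spectral_unitarymx // in Hr.
have Hd : P *m rho *m P^t* = diag_mx d.
  by rewrite Hr !mulmxA PU mul1mx -mulmxA PU mulmx1.
have dge0 k : 0 <= d 0 k.
  have := psdr (row k P); rewrite row_bil Hd mxE eqxx mulr1n //.
exists (fun k => complex.Re (d 0 k)), (fun k => row k P); split.
- by move=> k; case: (Re_ge0 (dge0 k)).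
- apply: complexI; rewrite rmorph_sum /=.
  under eq_bigr do rewrite (proj1 (Re_ge0 (dge0 _))).
  by rewrite rmorph1 -mxtrace_diag -trr Hr mxtrace_mulC mulmxA PU mul1mx.
- by move=> k; have := row_bil P 1%:M k; rewrite !mulmx1 PU mxE => ->; rewrite mxE eqxx.
- apply/matrixP => a b; rewrite Hr summxE mul_mx_diag !mxE.
  apply: eq_bigr => k _.
  by rewrite (proj1 (Re_ge0 (dge0 _))) !mxE big_ord1 !mxE mulrCA mulrA.
Qed.

Lemma sum_sig dA dB (Nn : finType) (M : Nn -> 'M[C]_dA) (X : 'M[C]_(dA*dB)) :
  \sum_n M n = 1%:M -> \sum_n ptraceA (kron (M n) 1%:M *m X) = ptraceA X.
Proof.
move=> hM; apply/matrixP => j j'; rewrite summxE.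
under eq_bigr do rewrite ptr_kronE.
rewrite [RHS]mxE exchange_big; apply: eq_bigr => i _.
rewrite exchange_big /= (bigD1 i) //= -mulr_suml -summxE hM mxE eqxx mul1r.
rewrite big1 ?addr0 // => k nk; by rewrite -mulr_suml -summxE hM mxE eq_sym (negbTE nk) mul0r.
Qed.

Lemma tr_ptr dA dB (X : 'M[C]_(dA*dB)) : \tr (ptraceA X) = \tr X.
Proof.
rewrite /mxtrace sum_tens exchange_big; apply: eq_bigr => j _.
by rewrite mxE.
Qed.

Lemma tr_pure n (phi : 'rV[C]_n) : \tr (phi^t* *m phi) = (phi *m phi^t*) 0 0.
Proof. by rewrite mxtrace_mulC /mxtrace big_ord1. Qed.

Lemma ptr_mix dA dB k (M : 'M[C]_dA) (c : 'I_k -> C) (X : 'I_k -> 'M[C]_(dA*dB)) :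
  ptraceA (kron M 1%:M *m \sum_i c i *: X i) =
  \sum_i c i *: ptraceA (kron M 1%:M *m X i).
Proof.
have E a b : (\sum_i c i *: X i) a b = \sum_i c i * X i a b.
  by rewrite summxE; apply: eq_bigr => ? _; rewrite mxE.
apply/matrixP => j j'; rewrite ptr_kronE summxE.
under [RHS]eq_bigr do rewrite mxE ptr_kronE mulr_sumr.
rewrite [RHS]exchange_big; apply: eq_bigr => i _.
under [RHS]eq_bigr do rewrite mulr_sumr.
rewrite [RHS]exchange_big; apply: eq_bigr => k0 _.
by rewrite E mulr_sumr; apply: eq_bigr => l _; rewrite mulrCA.
Qed.

Lemma extremal_mix (Nn Rin : finType) dB (sigma : Nn -> Rin -> 'M[C]_dB) k
  (p : 'I_k -> R) (s : 'I_k -> Nn -> Rin -> 'M[C]_dB) :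
  extremal_assemblage sigma -> (forall i, is_assemblage (s i)) ->
  (forall i, 0 <= p i) -> \sum_i p i = 1 ->
  (forall n r, sigma n r = \sum_i ((p i)%:C)%C *: s i n r) ->
  forall j, 0 < p j -> forall n r, s j n r = sigma n r.
Proof.
move=> [asg nomix] hs p0 p1 hmix j pj.
have S0 : 0 <= \sum_(i | i != j) p i by apply: sumr_ge0.
have Ej : p j + \sum_(i | i != j) p i = 1 by rewrite -p1 [in RHS](bigD1 j).
have [pj1|pj1] := eqVneq (p j) 1.
  have hz : \sum_(i | i != j) p i = 0 by lra.
  move=> n r; rewrite hmix (bigD1 j) //= pj1 scale1r big1 ?addr0 // => i ni.
  by rewrite (psumr_eq0P _ hz) // ?scale0r // => l _; apply: p0.
have pjlt : p j < 1 by rewrite lt_neqAle pj1 /=; lra.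
set q := 1 - p j.
have q0 : q != 0 by rewrite subr_eq0 eq_sym.
have qgt0 : 0 < q by rewrite /q; lra.
pose tau n r := \sum_(i | i != j) ((p i / q)%:C)%C *: s i n r.
have hmix' n r : sigma n r = ((p j)%:C)%C *: s j n r + (q%:C)%C *: tau n r.
  rewrite hmix (bigD1 j) //=; congr (_ + _); rewrite scaler_sumr.
  apply: eq_bigr => i _; rewrite scalerA -rmorphM /= mulrC divfK //.
have sumtau r : \sum_n tau n r = \sum_(i | i != j) ((p i / q)%:C)%C *: \sum_n s i n r.
  rewrite /tau exchange_big; apply: eq_bigr => i _; by rewrite scaler_sumr.
have tauA : is_assemblage tau.
  split.
  - move=> n r; apply: psd_sum => i _; apply: psd_scale; last by case: (hs i).
    by rewrite ler0c divr_ge0 // ltW.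
  - move=> r r'; rewrite !sumtau; apply: eq_bigr => i _.
    by case: (hs i) => _ h _; rewrite (h r r').
  - move=> r; rewrite sumtau raddf_sum /=.
    have T1 i : \tr (\sum_n s i n r) = 1 by case: (hs i) => _ _ ->.
    under eq_bigr do rewrite mxtraceZ T1 mulr1.
    rewrite -rmorph_sum /= -mulr_suml.
    have -> : \sum_(i | i != j) p i = q by rewrite /q; lra.
    by rewrite divff // rmorph1.
case: (pselect (s j = tau)) => [eq|neq].
  move=> n r; rewrite hmix' -eq -scalerDl -rmorphD /= /q.
  by rewrite addrC subrK scale1r.
exfalso; apply: nomix; exists (p j), (s j), tau; split => //.
by rewrite pj pjlt.
Qed.
End S.

Theorem theorem1 (R : realType) (Nn Rin : finType) (dB : nat)
    (sigma : Nn -> Rin -> 'M[R[i]]_dB) :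
  (0 < #|Rin|)%N ->
  extremal_assemblage sigma ->
  forall (dA : nat) (rhoAB : 'M[R[i]]_(dA * dB)),
    realizes sigma rhoAB ->
    EF rhoAB = vN_entropy (marginal sigma).
Proof.
move=> hR ext dA rho [st hreal].
have [Mf hMf] := choice hreal.
have key : forall (k : nat) (p : 'I_k -> R) (phi : 'I_k -> 'rV[R[i]]_(dA*dB)),
    (forall i, 0 <= p i) -> \sum_i p i = 1 ->
    (forall i, (phi i *m (phi i)^t*) 0 0 = 1) ->
    \sum_i ((p i)%:C)%C *: ((phi i)^t* *m phi i) = rho ->
    forall i, 0 < p i -> ptraceA ((phi i)^t* *m phi i) = marginal sigma.
  move=> k p phi p0 p1 n1 dec i pi.
  pose s i n r := ptraceA (kron (Mf r n) 1%:M *m ((phi i)^t* *m phi i)).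
  have sA : forall i, is_assemblage (s i).
    move=> l; split.
    - move=> n r; apply: psd_ptr; by case: (hMf r).
    - move=> r r'; rewrite /s !sum_sig //; [by case: (hMf r') | by case: (hMf r)].
    - move=> r; rewrite /s sum_sig ?tr_ptr ?tr_pure ?n1 //; by case: (hMf r).
  have hmix n r : sigma n r = \sum_i ((p i)%:C)%C *: s i n r.
    by case: (hMf r) => _ _ ->; rewrite -dec ptr_mix.
  have E := extremal_mix ext sA p0 p1 hmix pi.
  rewrite /marginal; case: pickP => [r0 _ | h].
    have [_ hs _] := hMf r0.
    rewrite -(sum_sig _ hs); apply: eq_bigr => n _; exact: E.
  by move: hR; rewrite (eq_card0 h).
have [p [phi [p0 p1 n1 dec]]] := state_decomp st.
have sumE : forall (k : nat) (p : 'I_k -> R) (phi : 'I_k -> 'rV[R[i]]_(dA*dB)),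
    (forall i, 0 <= p i) -> \sum_i p i = 1 ->
    (forall i, (phi i *m (phi i)^t*) 0 0 = 1) ->
    \sum_i ((p i)%:C)%C *: ((phi i)^t* *m phi i) = rho ->
    \sum_i p i * vN_entropy (ptraceA ((phi i)^t* *m phi i)) = vN_entropy (marginal sigma).
  move=> k p' phi' h0 h1 h2 h3.
  rewrite -[RHS]mul1r -h1 mulr_suml; apply: eq_bigr => i _.
  have [->|pn] := eqVneq (p' i) 0; first by rewrite !mul0r.
  by rewrite (key _ _ _ h0 h1 h2 h3) // lt_neqAle eq_sym pn h0.
rewrite /EF.
rewrite (_ : [set x : R | _]%classic = [set vN_entropy (marginal sigma)]%classic) ?inf1 //.
apply/seteqP; split => x /=.
  by move=> [k [p' [phi' [h0 h1 h2 h3 ->]]]]; apply: sumE.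
move=> ->; exists (dA * dB)%N, p, phi; split => //.
by rewrite sumE.
Qed.
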